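(* Consider the downlink RIS-aided multi-cell network described in the context, and let $L = \frac{T}{M_\text{B}M_\text{R}M_\text{U}+M_\text{B}M_\text{U}}$. Its area spectrum efficiency as a function of the unit training overhead $\beta\in[0,L)$ has the form $$\mathcal{A}(\beta) = K' \,\frac{T-\beta(M_\text{B}M_\text{R}M_\text{U}+M_\text{B}M_\text{U})}{T}\, p_{\text{E}_\text{B}}(\sigma_\text{B},\theta_\text{B})\, p_{\text{E}_\text{U}}(\sigma_\text{U},\theta_\text{U}),$$ with $K'>0$ independent of $\beta$. Then the optimal unit training overhead $\beta^*_\mathcal{A}\in(0,L)$ maximizing $\mathcal{A}$ satisfies $$\frac{\text{SNR}}{\sqrt{\pi}\, f(\beta^*_\mathcal{A})}\left(L-\beta^*_\mathcal{A}\right)\left(\frac{a e^{-a^2 f^2(\beta^*_\mathcal{A})}}{\operatorname{erf}(a f(\beta^*_\mathcal{A}))}+\frac{b e^{-b^2 f^2(\beta^*_\mathcal{A})}}{\operatorname{erf}(b f(\beta^*_\mathcal{A}))}-\frac{c e^{-c^2 f^2(\beta^*_\mathcal{A})}}{\operatorname{erf}(c f(\beta^*_\mathcal{A}))}-\frac{d e^{-d^2 f^2(\beta^*_\mathcal{A})}}{\operatorname{erf}(d f(\beta^*_\mathcal{A}))}\right)=1,$$ where $f(\beta)=\sqrt{1+\beta\,\text{SNR}}$, $a=\frac{\theta_\text{B}}{2\pi\sqrt{2k_\text{B}}}$, $b=\frac{\theta_\text{U}}{2\pi\sqrt{2k_\text{U}}}$, $c=\frac{1}{\sqrt{2k_\text{B}}}$,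 $d=\frac{1}{\sqrt{2k_\text{U}}}$.
   Context: Base stations (BSs) and user equipments (UEs) carry uniform linear arrays with $M_\text{B}\ge1$ and $M_\text{U}\ge1$ antennas; each reconfigurable intelligent surface (RIS) has $M_\text{R}$ reflecting elements. Beamwidths are $\theta_j=4/M_j$ (radians), $j\in\{\text{B},\text{U}\}$. A frame of length $T$ is split into a channel estimation phase of length $T_\text{E}=\beta(M_\text{B}M_\text{R}M_\text{U}+M_\text{B}M_\text{U})$ and a data phase of length $T_\text{D}=T-T_\text{E}$, where $\beta$ is the unit training overhead (training symbols per path). With average channel signal-to-noise ratio $\text{SNR}>0$, the estimation error variance is $\sigma_\text{E}^2=\frac{1}{1+\beta\,\text{SNR}}$, and the beam alignment error of end $j$ is a zero-mean Gaussian truncated to $[-\pi,\pi]$ with variance parameter $\sigma_j^2=k_j\pi^2\sigma_\text{E}^2$, $k_j\in(0,1]$. The alignment probability is $p_{\text{E}_j}(\sigma_j,\theta_j)=\operatorname{erf}\!\left(\frac{\theta_j}{2\sqrt{2\sigma_j^2}}\right)\Big/\operatorname{erf}\!\left(\frac{\pi}{\sqrt{2\sigma_j^2}}\right)$. The area spectrum efficiency is $\mathcal{A}=\frac{T_\text{D}}{T}\lambda_\text{B}\,\mathbb{E}[\log_2(1+\text{SINR})\,\mathbb{I}\{\text{SINR}>\tau\}]$, with $\lambda_\text{B}$ the BS density and $\tau$ an SINR threshold; the serving link's beamforming gain equals $N_\text{B}N_\text{U}$ with probability $p_{\text{E}_\text{B}}p_{\text{E}_\text{U}}$ and $0$ otherwise,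 and all remaining factors (geometry, blockage, interference, noise) form the constant $K'>0$ independent of $\beta$. *)

(* Defs.v *)
From Stdlib Require Import Reals.
From Coquelicot Require Import Coquelicot.
Open Scope R_scope.

Definition erf (x : R) : R :=
  2 / sqrt PI * RInt (fun t => exp (- t ^ 2)) 0 x.

Definition beamwidth (M : nat) : R := 4 / INR M.

Definition npaths (MB MR MU : nat) : R :=
  INR MB * INR MR * INR MU + INR MB * INR MU.

Definition sigmaE2 (SNR beta : R) : R := 1 / (1 + beta * SNR).

Definition sigma2 (k SNR beta : R) : R := k * PI ^ 2 * sigmaE2 SNR beta.

(* alignment probability p_E(sigma, theta), written with sigma^2 *)
Definition pE (s2 theta : R) : R :=
  erf (theta / (2 * sqrt (2 * s2))) / erf (PI / sqrt (2 * s2)).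

Definition ASE (K' T SNR kB kU : R) (MB MR MU : nat) (beta : R) : R :=
  K' * ((T - beta * npaths MB MR MU) / T)
     * pE (sigma2 kB SNR beta) (beamwidth MB)
     * pE (sigma2 kU SNR beta) (beamwidth MU).

(* Main.v *)
Require Import Defs.
From Stdlib Require Import Reals Lra Lia.
From Coquelicot Require Import Coquelicot.
Open Scope R_scope.

Lemma erf_derive x : is_derive erf x (2 / sqrt PI * exp (- x ^ 2)).
Proof.
  unfold erf.
  apply (is_derive_scal (fun y => RInt (fun t => exp (- t ^ 2)) 0 y) x (2 / sqrt PI)).
  apply (is_derive_RInt (fun t => exp (- t ^ 2)) _ 0 x).
  - apply filter_forall. intros y. apply (RInt_correct (V:=R_CompleteNormedModule)).
    apply (ex_RInt_continuous (V:=R_CompleteNormedModule)). intros z _. apply (ex_derive_continuous (V:=R_NormedModule)). auto_derive. auto.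
  - apply (ex_derive_continuous (V:=R_NormedModule)). auto_derive. auto.
Qed.

Lemma erf_pos x : 0 < x -> 0 < erf x.
Proof.
  intros Hx. unfold erf. apply Rmult_lt_0_compat.
  - apply Rdiv_lt_0_compat; [lra| apply sqrt_lt_R0, PI_RGT_0].
  - apply RInt_gt_0; auto. intros; apply exp_pos.
    intros. apply (ex_derive_continuous (V:=R_NormedModule)). auto_derive. auto.
Qed.

Lemma u_derive (al S x : R) : 0 < 1 + x * S ->
  is_derive (fun y => erf (al * sqrt (1 + y * S))) x
    (2 / sqrt PI * exp (- (al * sqrt (1 + x * S)) ^ 2) * (al * S / (2 * sqrt (1 + x * S)))).
Proof.
  intros Hp.
  assert (Hg : is_derive (fun y => al * sqrt (1 + y * S)) x (al * S / (2 * sqrt (1 + x * S)))).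
  { auto_derive. lra. field. apply Rgt_not_eq, sqrt_lt_R0; lra. }
  assert (H := is_derive_comp erf _ x _ _ (erf_derive _) Hg).
  simpl in H. unfold scal in H; simpl in H; unfold mult in H; simpl in H.
  rewrite Rmult_comm. exact H.
Qed.

Lemma h_derive (u1 u2 u3 u4 : R -> R) (d1 d2 d3 d4 K T N x : R) :
  is_derive u1 x d1 -> is_derive u2 x d2 -> is_derive u3 x d3 -> is_derive u4 x d4 ->
  u1 x <> 0 -> u2 x <> 0 -> u3 x <> 0 -> u4 x <> 0 -> T <> 0 ->
  is_derive (fun y => K * ((T - y * N) / T) * (u1 y / u3 y) * (u2 y / u4 y)) x
    (K / T * (u1 x / u3 x * (u2 x / u4 x)) *
      (- N + (T - x * N) * (d1 / u1 x - d3 / u3 x + d2 / u2 x - d4 / u4 x))).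
Proof.
  intros H1 H2 H3 H4 n1 n2 n3 n4 nT.
  assert (Hl : is_derive (fun y => K * ((T - y * N) / T)) x (- K * N / T)).
  { auto_derive. auto. field. auto. }
  assert (H := is_derive_mult _ _ x _ _ (is_derive_mult _ _ x _ _ Hl (is_derive_div _ _ x _ _ H1 H3 n3) (fun _ _ => Rmult_comm _ _))
              (is_derive_div _ _ x _ _ H2 H4 n4) (fun _ _ => Rmult_comm _ _)).
  match type of H with is_derive _ _ ?l => replace (K / T * _ * _) with l; [exact H|] end.
  unfold plus, mult; simpl. unfold mult; simpl. field. repeat split; auto.
Qed.

Lemma pE_eq (k th SNR y : R) : 0 < k -> 0 < SNR -> 0 <= y ->
  pE (sigma2 k SNR y) th =
  erf (th / (2 * PI * sqrt (2 * k)) * sqrt (1 + y * SNR)) /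
  erf (1 / sqrt (2 * k) * sqrt (1 + y * SNR)).
Proof.
  intros Hk HS Hy.
  assert (Hp : 0 < 1 + y * SNR) by nra.
  assert (Hf : 0 < sqrt (1 + y * SNR)) by (apply sqrt_lt_R0; lra).
  assert (Hk2 : 0 < sqrt (2 * k)) by (apply sqrt_lt_R0; lra).
  assert (HPI := PI_RGT_0).
  assert (Hs : sqrt (2 * sigma2 k SNR y) = sqrt (2 * k) * PI / sqrt (1 + y * SNR)).
  { apply sqrt_lem_1.
    - unfold sigma2, sigmaE2. apply Rmult_le_pos; [lra|].
      apply Rmult_le_pos; [apply Rmult_le_pos; [lra| nra]|].
      apply Rlt_le, Rdiv_lt_0_compat; lra.
    - apply Rlt_le, Rdiv_lt_0_compat; nra.
    - unfold sigma2, sigmaE2.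
      replace (sqrt (2 * k) * PI / sqrt (1 + y * SNR) * (sqrt (2 * k) * PI / sqrt (1 + y * SNR)))
        with ((sqrt (2 * k) * sqrt (2 * k)) * PI ^ 2 / (sqrt (1 + y * SNR) * sqrt (1 + y * SNR)))
        by (field; lra).
      rewrite !sqrt_sqrt by lra. field. lra. }
  unfold pE. rewrite Hs. f_equal; f_equal; field; lra.
Qed.

Theorem corollary2
  (MB MR MU : nat) (T SNR kB kU K' beta_star : R) :
  (1 <= MB)%nat -> (1 <= MR)%nat -> (1 <= MU)%nat ->
  0 < T -> 0 < SNR -> 0 < kB <= 1 -> 0 < kU <= 1 -> 0 < K' ->
  let L := T / npaths MB MR MU in
  0 < beta_star < L ->
  (forall beta, 0 <= beta < L ->
     ASE K' T SNR kB kU MB MR MU beta <= ASE K' T SNR kB kU MB MR MU beta_star) ->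
  let f := fun beta => sqrt (1 + beta * SNR) in
  let a := beamwidth MB / (2 * PI * sqrt (2 * kB)) in
  let b := beamwidth MU / (2 * PI * sqrt (2 * kU)) in
  let c := 1 / sqrt (2 * kB) in
  let d := 1 / sqrt (2 * kU) in
  let fs := f beta_star in
  SNR / (sqrt PI * fs) * (L - beta_star) *
    (a * exp (- a ^ 2 * fs ^ 2) / erf (a * fs)
     + b * exp (- b ^ 2 * fs ^ 2) / erf (b * fs)
     - c * exp (- c ^ 2 * fs ^ 2) / erf (c * fs)
     - d * exp (- d ^ 2 * fs ^ 2) / erf (d * fs)) = 1.
Proof.
  intros HMB HMR HMU HT HS HkB HkU HK L Hb Hmax f a b c d fs.
  assert (HN : 0 < npaths MB MR MU).
  { unfold npaths.
    assert (1 <= INR MB) by (apply (le_INR 1); lia).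
    assert (1 <= INR MR) by (apply (le_INR 1); lia).
    assert (1 <= INR MU) by (apply (le_INR 1); lia).
    assert (0 < INR MB * INR MR) by nra.
    assert (0 < INR MB * INR MR * INR MU) by nra.
    nra. }
  set (N := npaths MB MR MU) in *.
  assert (HPI := PI_RGT_0).
  assert (HsPI : 0 < sqrt PI) by (apply sqrt_lt_R0; lra).
  assert (HkB2 : 0 < sqrt (2 * kB)) by (apply sqrt_lt_R0; lra).
  assert (HkU2 : 0 < sqrt (2 * kU)) by (apply sqrt_lt_R0; lra).
  assert (Ha : 0 < a).
  { unfold a, beamwidth. assert (1 <= INR MB) by (apply (le_INR 1); lia).
    apply Rdiv_lt_0_compat; [apply Rdiv_lt_0_compat; lra| nra]. }
  assert (Hbb : 0 < b).
  { unfold b, beamwidth. assert (1 <= INR MU) by (apply (le_INR 1); lia).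
    apply Rdiv_lt_0_compat; [apply Rdiv_lt_0_compat; lra| nra]. }
  assert (Hc : 0 < c) by (unfold c; apply Rdiv_lt_0_compat; lra).
  assert (Hd : 0 < d) by (unfold d; apply Rdiv_lt_0_compat; lra).
  assert (Hp : 0 < 1 + beta_star * SNR) by nra.
  assert (Hfs : 0 < fs) by (unfold fs, f; apply sqrt_lt_R0; lra).
  set (u := fun al y => erf (al * sqrt (1 + y * SNR))).
  set (h := fun y => K' * ((T - y * N) / T) * (u a y / u c y) * (u b y / u d y)).
  assert (Heq : forall y, 0 <= y -> ASE K' T SNR kB kU MB MR MU y = h y).
  { intros y Hy. unfold ASE, h, u. fold N.
    rewrite !pE_eq by lra. reflexivity. }
  assert (Hu : forall al, 0 < al -> 0 < u al beta_star).
  { intros al Hal. unfold u. apply erf_pos. fold (f beta_star). fold fs. nra. }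
  assert (HD := h_derive (u a) (u b) (u c) (u d) _ _ _ _ K' T N beta_star
     (u_derive a SNR beta_star Hp) (u_derive b SNR beta_star Hp)
     (u_derive c SNR beta_star Hp) (u_derive d SNR beta_star Hp)
     (Rgt_not_eq _ _ (Hu a Ha)) (Rgt_not_eq _ _ (Hu b Hbb))
     (Rgt_not_eq _ _ (Hu c Hc)) (Rgt_not_eq _ _ (Hu d Hd)) (Rgt_not_eq _ _ HT)).
  apply is_derive_Reals in HD.
  assert (HD0 := deriv_maximum h 0 L beta_star (exist _ _ HD) (proj1 Hb) (proj2 Hb)).
  unfold derive_pt in HD0; cbn [proj1_sig] in HD0.
  assert (Z := HD0 (fun x Hx1 Hx2 => ltac:(rewrite <- !Heq by lra; apply Hmax; lra))).
  clear HD0 HD.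
  fold (f beta_star) in Z. fold fs in Z.
  assert (Hua := Hu a Ha). assert (Hub := Hu b Hbb).
  assert (Huc := Hu c Hc). assert (Hud := Hu d Hd).
  unfold u in Z, Hua, Hub, Huc, Hud.
  change (sqrt (1 + beta_star * SNR)) with fs in Z, Hua, Hub, Huc, Hud.
  set (Ea := erf (a * fs)) in *. set (Eb := erf (b * fs)) in *.
  set (Ec := erf (c * fs)) in *. set (Ed := erf (d * fs)) in *.
  apply Rmult_integral in Z. destruct Z as [Z|Z].
  { exfalso. assert (0 < K' / T * (Ea / Ec * (Eb / Ed))).
    { apply Rmult_lt_0_compat; [apply Rdiv_lt_0_compat; lra|].
      apply Rmult_lt_0_compat; apply Rdiv_lt_0_compat; lra. }
    lra. }
  replace (- a ^ 2 * fs ^ 2) with (- (a * fs) ^ 2) by ring.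
  replace (- b ^ 2 * fs ^ 2) with (- (b * fs) ^ 2) by ring.
  replace (- c ^ 2 * fs ^ 2) with (- (c * fs) ^ 2) by ring.
  replace (- d ^ 2 * fs ^ 2) with (- (d * fs) ^ 2) by ring.
  set (ea := exp (- (a * fs) ^ 2)) in *. set (eb := exp (- (b * fs) ^ 2)) in *.
  set (ec := exp (- (c * fs) ^ 2)) in *. set (ed := exp (- (d * fs) ^ 2)) in *.
  unfold L.
  assert (HN0 : N <> 0) by lra.
  set (Sg := 2 / sqrt PI * ea * (a * SNR / (2 * fs)) / Ea -
        2 / sqrt PI * ec * (c * SNR / (2 * fs)) / Ec +
        2 / sqrt PI * eb * (b * SNR / (2 * fs)) / Eb -
        2 / sqrt PI * ed * (d * SNR / (2 * fs)) / Ed) in Z.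
  transitivity ((T - beta_star * N) * Sg / N).
  { unfold Sg. field. repeat split; lra. }
  replace ((T - beta_star * N) * Sg) with N by lra. field. auto.
Qed.
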